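(* Let $K$ be a nonempty simplex in a topological vector space $F$ and let $T:K\to 2^{K}$ be a *-weakly naturally quasiconvex correspondence. Then there exists $x^*\in K$ such that $x^*\in\overline{T}(x^* )$.
   Context: A simplex is the convex hull of a finite affinely independent set. For $T:X\to 2^Y$: $\mathrm{Gr}(T)=\{(x,y):y\in T(x)\}$; $\overline{T}(x)=\{y\in Y:(x,y)\in\mathrm{cl}_{X\times Y}\mathrm{Gr}(T)\}$; for $V\subset F$, $T_V(x)=(T(x)+V)\cap Y$. $\Delta_{n-1}=\{(\lambda_1,\dots,\lambda_n)\in\mathbb{R}^n:\sum_i\lambda_i=1,\ \lambda_i\ge 0\}$. Weakly naturally quasiconvex (WNQ): let $X,Y$ be nonempty convex subsets of topological vector spaces. A correspondence $T:X\to 2^{Y}$ is weakly naturally quasiconvex if for each $n\in\mathbb{N}$ and each finite set $\{x_1,\dots,x_n\}\subset X$ there exist $y_i\in T(x_i)$ ($i=1,\dots,n$) and a bijection $g:\Delta_{n-1}\to\Delta_{n-1}$ (depending on $x_1,\dots,x_n$) of the form $g(\lambda_1,\dots,\lambda_n)=(g_1(\lambda_1),\dots,g_n(\lambda_n))$, where each $g_i:[0,1]\to[0,1]$ is continuous with $g_i(0)=0$ and $g_i(1)=1$, such that for every $(\lambda_1,\dots,\lambda_n)\in\Delta_{n-1}$ we have $\sum_{i=1}^n g_i(\lambda_i)y_i\in T\big(\sum_{i=1}^n\lambda_i x_i\big)$. *-weakly naturally quasiconvex: $T:X\to 2^Y$, $Y\subset F$, is *-weakly naturally quasiconvex if for each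 neighborhood $V$ of the origin in $F$ the correspondence $T_V$ is weakly naturally quasiconvex. *)

(* Defs.v *)
From Stdlib Require Import Reals.
Open Scope R_scope.
Set Implicit Arguments.

(** No Hausdorff axiom. *)
Structure TVS : Type := {
  vcar :> Type;
  vzero : vcar;
  vadd : vcar -> vcar -> vcar;
  vopp : vcar -> vcar;
  vscal : R -> vcar -> vcar;
  vadd_assoc : forall x y z, vadd x (vadd y z) = vadd (vadd x y) z;
  vadd_comm : forall x y, vadd x y = vadd y x;
  vadd_zero : forall x, vadd x vzero = x;
  vadd_opp : forall x, vadd x (vopp x) = vzero;
  vscal_one : forall x, vscal 1 x = x;
  vscal_assoc : forall a b x, vscal a (vscal b x) = vscal (a * b) x;
  vscal_distr_v : forall a x y, vscal a (vadd x y) = vadd (vscal a x) (vscal a y);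
  vscal_distr_r : forall a b x, vscal (a + b) x = vadd (vscal a x) (vscal b x);
  vopen : (vcar -> Prop) -> Prop;
  vopen_full : vopen (fun _ => True);
  vopen_inter : forall U W, vopen U -> vopen W -> vopen (fun x => U x /\ W x);
  vopen_union : forall (I : Type) (U : I -> vcar -> Prop),
      (forall i, vopen (U i)) -> vopen (fun x => exists i, U i x);
  vadd_cont : forall x y (U : vcar -> Prop), vopen U -> U (vadd x y) ->
      exists V W, vopen V /\ V x /\ vopen W /\ W y /\
        forall x' y', V x' -> W y' -> U (vadd x' y');
  vscal_cont : forall t x (U : vcar -> Prop), vopen U -> U (vscal t x) ->
      exists d V, 0 < d /\ vopen V /\ V x /\
        forall t' x', Rabs (t' - t) < d -> V x' -> U (vscal t' x')
}.

Arguments vzero {_}.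
Arguments vadd {_}.
Arguments vopp {_}.
Arguments vscal {_}.
Arguments vopen {_}.

Fixpoint vsum {F : TVS} (n : nat) (f : nat -> F) : F :=
  match n with
  | O => vzero
  | S m => vadd (vsum m f) (f m)
  end.

Fixpoint rsum (n : nat) (f : nat -> R) : R :=
  match n with
  | O => 0
  | S m => rsum m f + f m
  end.

(** lam in Delta_{n-1} (coordinates indexed by 0..n-1). *)
Definition in_simplex_std (n : nat) (lam : nat -> R) : Prop :=
  (forall i, (i < n)%nat -> 0 <= lam i) /\ rsum n lam = 1.

Definition aff_indep {F : TVS} (n : nat) (a : nat -> F) : Prop :=
  forall c : nat -> R, rsum n c = 0 ->
    vsum n (fun i => vscal (c i) (a i)) = vzero ->
    forall i, (i < n)%nat -> c i = 0.

Definition is_simplex {F : TVS} (K : F -> Prop) : Prop :=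
  exists (n : nat) (a : nat -> F), aff_indep n a /\
    forall x, K x <-> exists lam, in_simplex_std n lam /\
                         x = vsum n (fun i => vscal (lam i) (a i)).

(** Correspondences T : X -> 2^Y are represented by T : F -> F -> Prop,
    where "T x y" means y \in T(x); only x \in X matters. *)

Definition T_V {F : TVS} (Y : F -> Prop) (T : F -> F -> Prop) (V : F -> Prop)
  : F -> F -> Prop :=
  fun x y => Y y /\ exists t v, T x t /\ V v /\ y = vadd t v.

Definition WNQ {F : TVS} (X Y : F -> Prop) (T : F -> F -> Prop) : Prop :=
  forall (n : nat) (x : nat -> F),
    (1 <= n)%nat ->
    (forall i, (i < n)%nat -> X (x i)) ->
    (forall i j, (i < n)%nat -> (j < n)%nat -> x i = x j -> i = j) ->
    exists (y : nat -> F) (g : nat -> R -> R),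
      (forall i, (i < n)%nat -> T (x i) (y i)) /\
      (forall i, (i < n)%nat ->
         (forall s, 0 <= s <= 1 -> 0 <= g i s <= 1) /\
         (forall s, 0 <= s <= 1 -> forall eps, 0 < eps -> exists d, 0 < d /\
            forall s', 0 <= s' <= 1 -> Rabs (s' - s) < d ->
              Rabs (g i s' - g i s) < eps) /\
         g i 0 = 0 /\ g i 1 = 1) /\
      (forall lam, in_simplex_std n lam -> in_simplex_std n (fun i => g i (lam i))) /\
      (forall lam mu, in_simplex_std n lam -> in_simplex_std n mu ->
         (forall i, (i < n)%nat -> g i (lam i) = g i (mu i)) ->
         forall i, (i < n)%nat -> lam i = mu i) /\
      (forall mu, in_simplex_std n mu -> exists lam, in_simplex_std n lam /\
         forall i, (i < n)%nat -> g i (lam i) = mu i) /\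
      (forall lam, in_simplex_std n lam ->
         T (vsum n (fun i => vscal (lam i) (x i)))
           (vsum n (fun i => vscal (g i (lam i)) (y i)))).

Definition nbhd0 {F : TVS} (V : F -> Prop) : Prop :=
  exists U, vopen U /\ U vzero /\ forall z, U z -> V z.

Definition star_WNQ {F : TVS} (X Y : F -> Prop) (T : F -> F -> Prop) : Prop :=
  forall V, nbhd0 V -> WNQ X Y (T_V Y T V).

(** (x,y) lies in the closure, in X x Y (subspace of the product topology),
    of Gr(T) = {(x,y) : x \in X, y \in T(x)}; i.e. y \in closure-T(x). *)
Definition in_closure_graph {F : TVS} (X Y : F -> Prop) (T : F -> F -> Prop)
  (x y : F) : Prop :=
  X x /\ Y y /\
  forall U W, vopen U -> U x -> vopen W -> W y ->
    exists x' y', X x' /\ T x' y' /\ U x' /\ W y'.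

(* Main.v *)
Require Import Defs.
From Stdlib Require Import Reals Lra Lia Classical ZArith IndefiniteDescription.
Open Scope R_scope.
Arguments vadd_assoc {_}. Arguments vadd_comm {_}. Arguments vadd_zero {_}. Arguments vadd_opp {_}.
Arguments vscal_one {_}. Arguments vscal_assoc {_}. Arguments vscal_distr_v {_}. Arguments vscal_distr_r {_}.
Arguments vopen_full {_}. Arguments vopen_inter {_}. Arguments vopen_union {_}. Arguments vadd_cont {_}. Arguments vscal_cont {_}.

Lemma vadd_0l {F : TVS} (x : F) : vadd vzero x = x.
Proof. rewrite vadd_comm; apply vadd_zero. Qed.

Lemma vadd_cancel_self {F : TVS} (z : F) : z = vadd z z -> z = vzero.
Proof. intro H.
  assert (H0 : vadd z (vopp z) = vadd (vadd z z) (vopp z)) by (rewrite <- H; reflexivity).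
  rewrite <- vadd_assoc in H0. rewrite !vadd_opp, vadd_zero in H0. auto. Qed.

Lemma vscal_0 {F : TVS} (x : F) : vscal 0 x = vzero.
Proof. apply vadd_cancel_self. rewrite <- vscal_distr_r, Rplus_0_r. reflexivity. Qed.

Lemma vscal_a0 {F : TVS} (a : R) : vscal a (@vzero F) = vzero.
Proof. apply vadd_cancel_self. rewrite <- vscal_distr_v, vadd_zero. reflexivity. Qed.

Lemma opp_unique {F : TVS} (x y : F) : vadd x y = vzero -> y = vopp x.
Proof. intro H.
  rewrite <- (vadd_zero y), <- (vadd_opp x), vadd_assoc, (vadd_comm y x), H, vadd_0l.
  reflexivity. Qed.

Lemma vopp_scal {F : TVS} (x : F) : vopp x = vscal (-1) x.
Proof. symmetry. apply opp_unique.
  rewrite <- (vscal_one x) at 1. rewrite <- vscal_distr_r.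
  replace (1 + -1) with 0 by ring. apply vscal_0. Qed.

Lemma solve_t {F : TVS} (y t v : F) : y = vadd t v -> t = vadd y (vscal (-1) v).
Proof. intro H. rewrite H, <- vopp_scal, <- vadd_assoc, vadd_opp, vadd_zero. reflexivity. Qed.

Lemma vadd_swap4 {F : TVS} (a b c d : F) :
  vadd (vadd a b) (vadd c d) = vadd (vadd a c) (vadd b d).
Proof.
  rewrite <- !vadd_assoc. f_equal. rewrite !vadd_assoc. f_equal. apply vadd_comm. Qed.

Lemma vsum_ext {F : TVS} n (f g : nat -> F) :
  (forall i, (i < n)%nat -> f i = g i) -> vsum n f = vsum n g.
Proof. induction n; intro H; simpl; [reflexivity|].
  rewrite IHn by (intros; apply H; lia). rewrite H by lia. reflexivity. Qed.

Lemma vsum_add {F : TVS} n (f g : nat -> F) :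
  vsum n (fun i => vadd (f i) (g i)) = vadd (vsum n f) (vsum n g).
Proof. induction n; simpl. rewrite vadd_zero; reflexivity.
  rewrite IHn. apply vadd_swap4. Qed.

Lemma vsum_scal {F : TVS} n c (f : nat -> F) :
  vscal c (vsum n f) = vsum n (fun i => vscal c (f i)).
Proof. induction n; simpl. apply vscal_a0. rewrite vscal_distr_v, IHn. reflexivity. Qed.

Lemma vsum_zero {F : TVS} n : vsum n (fun _ => @vzero F) = vzero.
Proof. induction n; simpl; [reflexivity|]. rewrite IHn, vadd_zero. reflexivity. Qed.

Lemma vsum_single {F : TVS} n i (a : nat -> F) : (i < n)%nat ->
  vsum n (fun j => vscal (if Nat.eqb j i then 1 else 0) (a j)) = a i.
Proof. induction n; intro Hi; [lia|]. simpl.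
  destruct (Nat.eqb_spec n i).
  - subst. rewrite (vsum_ext _ _ (fun _ => vzero)).
    + rewrite vsum_zero, vadd_0l, vscal_one. reflexivity.
    + intros j Hj. destruct (Nat.eqb_spec j i); [lia|]. apply vscal_0.
  - rewrite IHn by lia. rewrite vscal_0, vadd_zero. reflexivity. Qed.

Lemma vsum_swap {F : TVS} N M (c : nat -> R) (d : nat -> nat -> R) (a : nat -> F) :
  vsum N (fun i => vscal (c i) (vsum M (fun j => vscal (d i j) (a j)))) =
  vsum M (fun j => vscal (rsum N (fun i => c i * d i j)) (a j)).
Proof. induction N; simpl.
  - rewrite (vsum_ext _ _ (fun _ => vzero)). symmetry; apply vsum_zero.
    intros; apply vscal_0.
  - rewrite IHN, vsum_scal, <- vsum_add. apply vsum_ext. intros j _.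
    rewrite vscal_assoc, <- vscal_distr_r. reflexivity. Qed.

Lemma rsum_ext n f g : (forall i, (i < n)%nat -> f i = g i) -> rsum n f = rsum n g.
Proof. induction n; intro H; simpl; [reflexivity|].
  rewrite IHn by (intros; apply H; lia). rewrite H by lia. reflexivity. Qed.

Lemma rsum_plus n f g : rsum n (fun i => f i + g i) = rsum n f + rsum n g.
Proof. induction n; simpl. ring. rewrite IHn. ring. Qed.

Lemma rsum_scal n c f : rsum n (fun i => c * f i) = c * rsum n f.
Proof. induction n; simpl. ring. rewrite IHn. ring. Qed.

Lemma rsum_nonneg n f : (forall i, (i < n)%nat -> 0 <= f i) -> 0 <= rsum n f.
Proof. induction n; intro H; simpl. lra.
  assert (0 <= rsum n f) by (apply IHn; intros; apply H; lia).
  assert (0 <= f n) by (apply H; lia). lra. Qed.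

Lemma rsum_ge_term n f i : (forall i, (i < n)%nat -> 0 <= f i) -> (i < n)%nat ->
  f i <= rsum n f.
Proof. induction n; intros H Hi; [lia|]. simpl.
  destruct (Nat.eq_dec i n).
  - subst. assert (0 <= rsum n f) by (apply rsum_nonneg; intros; apply H; lia). lra.
  - assert (f i <= rsum n f) by (apply IHn; [intros; apply H; lia | lia]).
    assert (0 <= f n) by (apply H; lia). lra. Qed.

Lemma rsum_zero_all n f : (forall i, (i < n)%nat -> 0 <= f i) -> rsum n f = 0 ->
  forall i, (i < n)%nat -> f i = 0.
Proof. intros H H0 i Hi. pose proof (rsum_ge_term n f i H Hi). pose proof (H i Hi). lra. Qed.

Lemma rsum_single n i A : (i < n)%nat ->
  rsum n (fun m => if Nat.eqb m i then A else 0) = A.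
Proof. induction n; intro Hi; [lia|]. simpl.
  destruct (Nat.eqb_spec n i).
  - subst. rewrite (rsum_ext _ _ (fun _ => 0)). 
    + clear. induction i; simpl; lra.
    + intros j Hj. destruct (Nat.eqb_spec j i); [lia|]. reflexivity.
  - rewrite IHn by lia. ring. Qed.

Lemma rsum_close n (lam mu : nat -> R) r :
  (forall i, (i < n)%nat -> Rabs (mu i - lam i) < r) ->
  Rabs (rsum n mu - rsum n lam) <= INR n * r.
Proof. induction n; intro H; cbn [rsum].
  - rewrite Rminus_0_r, Rabs_R0. simpl. lra.
  - replace (rsum n mu + mu n - (rsum n lam + lam n)) with
      ((rsum n mu - rsum n lam) + (mu n - lam n)) by ring.
    eapply Rle_trans; [apply Rabs_triang|].
    assert (Rabs (rsum n mu - rsum n lam) <= INR n * r) by (apply IHn; intros; apply H; lia).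
    assert (Rabs (mu n - lam n) < r) by (apply H; lia).
    rewrite S_INR. lra. Qed.
Lemma Rdiv_le_0_compat a b : 0 <= a -> 0 < b -> 0 <= a / b.
Proof. intros. unfold Rdiv. apply Rmult_le_pos; [lra|]. left; apply Rinv_0_lt_compat; lra. Qed.

Lemma stoch : forall n (Q : nat -> nat -> R),
  (forall i j, (i < S n)%nat -> (j < S n)%nat -> 0 <= Q i j) ->
  (forall i, (i < S n)%nat -> rsum (S n) (Q i) = 1) ->
  exists lam, in_simplex_std (S n) lam /\
    forall j, (j < S n)%nat -> lam j = rsum (S n) (fun i => lam i * Q i j).
Proof.
  induction n; intros Q Hnn Hrow.
  - exists (fun _ => 1). split.
    + split. intros; lra. simpl; lra.
    + intros j Hj. assert (j = 0%nat) by lia. subst.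
      pose proof (Hrow 0%nat ltac:(lia)). simpl in *. lra.
  - set (m := S n).
    assert (Hrm : rsum (S m) (Q m) = 1) by (apply Hrow; lia).
    assert (Hmm1 : Q m m <= 1).
    { rewrite <- Hrm. apply rsum_ge_term; [intros; apply Hnn; lia| lia]. }
    destruct (Req_dec (Q m m) 1) as [Heq|Hne].
    + assert (Hz : forall j, (j < m)%nat -> Q m j = 0).
      { apply rsum_zero_all. intros; apply Hnn; lia.
        change (rsum m (Q m) + Q m m = 1) in Hrm. lra. }
      exists (fun i => if Nat.eqb i m then 1 else 0). split.
      * split. intros i _; destruct (Nat.eqb i m); lra.
        apply rsum_single; lia.
      * intros j Hj.
        rewrite (rsum_ext _ _ (fun i => if Nat.eqb i m then Q m j else 0)).
        2:{ intros i _. destruct (Nat.eqb_spec i m); subst; ring. }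
        rewrite rsum_single by lia.
        destruct (Nat.eqb_spec j m). subst; lra. rewrite Hz by lia. reflexivity.
    + assert (Hc : 0 < 1 - Q m m) by lra. set (c := 1 - Q m m) in *.
      set (Q' := fun i j => Q i j + Q i m / c * Q m j).
      destruct (IHn Q') as [lam' [[Hl0 Hl1] Hfix]].
      { intros i j Hi Hj. unfold Q'. 
        assert (0 <= Q i j) by (apply Hnn; lia).
        assert (0 <= Q i m) by (apply Hnn; lia).
        assert (0 <= Q m j) by (apply Hnn; lia).
        assert (0 <= Q i m / c) by (apply Rdiv_le_0_compat; lra).
        nra. }
      { intros i Hi. unfold Q'. rewrite rsum_plus, rsum_scal.
        assert (H1 : rsum (S m) (Q i) = 1) by (apply Hrow; lia).
        change (rsum m (Q i) + Q i m = 1) in H1.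
        change (rsum m (Q m) + Q m m = 1) in Hrm.
        fold m. replace (rsum m (Q m)) with c by (unfold c; lra).
        replace (Q i m / c * c) with (Q i m) by (field; lra). lra. }
      set (w := rsum m (fun i => lam' i * Q i m) / c).
      assert (Hw : 0 <= w).
      { unfold w. apply Rdiv_le_0_compat; [|lra]. apply rsum_nonneg.
        intros i Hi. assert (0 <= Q i m) by (apply Hnn; lia). pose proof (Hl0 i Hi). nra. }
      exists (fun j => if Nat.eqb j m then w / (1 + w) else lam' j / (1 + w)).
      assert (Hsum : forall f : nat -> R, rsum (S m) (fun j => if Nat.eqb j m then f m else f j) = rsum m f + f m).
      { intro f. cbn [rsum]. rewrite Nat.eqb_refl. f_equal. apply rsum_ext.
        intros i Hi. destruct (Nat.eqb_spec i m); [lia|reflexivity]. }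
      split.
      * split.
        -- intros i Hi. destruct (Nat.eqb_spec i m).
           apply Rdiv_le_0_compat; lra.
           apply Rdiv_le_0_compat; [apply Hl0; lia|lra].
        -- cbn [rsum]. rewrite Nat.eqb_refl.
           rewrite (rsum_ext _ _ (fun k => / (1+w) * lam' k)).
           2:{ intros i Hi. destruct (Nat.eqb_spec i m); [lia|]. unfold Rdiv; ring. }
           rewrite rsum_scal. unfold m; rewrite Hl1. field. lra.
      * intros j Hj.
        assert (E : rsum (S m) (fun i => (if Nat.eqb i m then w / (1 + w) else lam' i / (1 + w)) * Q i j)
                    = / (1+w) * (rsum m (fun i => lam' i * Q i j) + w * Q m j)).
        { cbn [rsum]. rewrite Nat.eqb_refl.
          rewrite (rsum_ext m _ (fun i => / (1+w) * (lam' i * Q i j))).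
          2:{ intros i Hi. destruct (Nat.eqb_spec i m); [lia|]. unfold Rdiv; ring. }
          rewrite rsum_scal. field. lra. }
        rewrite E. clear E.
        assert (HS: rsum m (fun i => lam' i * Q i m) = w * c) by (unfold w; field; lra).
        destruct (Nat.eqb_spec j m).
        -- subst j. rewrite HS. unfold c. field. lra.
        -- rewrite (Hfix j) by lia. unfold Q'.
           rewrite (rsum_ext _ _ (fun i => lam' i * Q i j + Q m j / c * (lam' i * Q i m))).
           2:{ intros; unfold Rdiv; ring. }
           rewrite rsum_plus, rsum_scal. fold (rsum m (fun i => lam' i * Q i m)).
           change (rsum (S n)) with (rsum m). rewrite HS. field. lra.
Qed.
Lemma Rdiv_le_0_compat' a b : 0 <= a -> 0 < b -> 0 <= a / b.
Proof. intros. unfold Rdiv. apply Rmult_le_pos; [lra|]. left; apply Rinv_0_lt_compat; lra. Qed.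
Lemma Rdiv_le_1' a b : a <= b -> 0 < b -> a / b <= 1.
Proof. intros. apply (Rmult_le_reg_r b); auto. unfold Rdiv. rewrite Rmult_assoc, Rinv_l by lra. lra. Qed.

Definition v3 (i j k : nat) (s t u : R) : nat -> R :=
  fun m => if Nat.eqb m i then s else if Nat.eqb m j then t else if Nat.eqb m k then u else 0.

Definition sg (i : nat) (A : R) : nat -> R := fun m => if Nat.eqb m i then A else 0.

Lemma rsum3 n i j k A B C f : (i < n)%nat -> (j < n)%nat -> (k < n)%nat ->
  (forall m, (m < n)%nat -> f m = sg i A m + sg j B m + sg k C m) ->
  rsum n f = A + B + C.
Proof. intros Hi Hj Hk H. rewrite (rsum_ext _ _ _ H), !rsum_plus.
  unfold sg. rewrite !rsum_single by auto. reflexivity. Qed.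

Lemma L3 n (g : nat -> R -> R) :
  (forall i, (i<n)%nat -> g i 0 = 0) ->
  (forall lam, in_simplex_std n lam -> in_simplex_std n (fun i => g i (lam i))) ->
  forall i j k s t u, (i<n)%nat -> (j<n)%nat -> (k<n)%nat -> i <> j -> i <> k -> j <> k ->
  0 <= s -> 0 <= t -> 0 <= u -> s + t + u = 1 ->
  g i s + g j t + g k u = 1.
Proof.
  intros H0 Himg i j k s t u Hi Hj Hk Hij Hik Hjk Hs Ht Hu Hsum.
  assert (Hin : in_simplex_std n (v3 i j k s t u)).
  { split.
    - intros m _. unfold v3. destruct (Nat.eqb m i), (Nat.eqb m j), (Nat.eqb m k); lra.
    - rewrite <- Hsum. apply (rsum3 _ i j k); auto. intros m Hm. unfold v3, sg.
      destruct (Nat.eqb_spec m i), (Nat.eqb_spec m j), (Nat.eqb_spec m k); subst; try lia; lra. }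
  destruct (Himg _ Hin) as [_ Hr]. rewrite <- Hr. symmetry.
  apply (rsum3 _ i j k); auto. intros m Hm. unfold v3, sg.
  destruct (Nat.eqb_spec m i), (Nat.eqb_spec m j), (Nat.eqb_spec m k); subst; try lia;
    try rewrite H0 by auto; lra.
Qed.




Lemma phi_id (phi : R -> R) :
  (forall s, 0 <= s <= 1 -> 0 <= phi s) -> phi 1 = 1 ->
  (forall s t, 0 <= s -> 0 <= t -> s + t <= 1 -> phi (s + t) = phi s + phi t) ->
  forall s, 0 <= s <= 1 -> phi s = s.
Proof.
  intros Hpos H1 Hadd.
  assert (Hmono : forall x y, 0 <= x -> x <= y -> y <= 1 -> phi x <= phi y).
  { intros x y Hx Hxy Hy. replace y with (x + (y - x)) by ring.
    rewrite Hadd by lra. assert (0 <= phi (y - x)) by (apply Hpos; lra). lra. }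
  assert (Hk : forall m : nat, (1 <= m)%nat -> forall k : nat, (k <= m)%nat ->
            phi (INR k / INR m) = INR k * phi (1 / INR m)).
  { intros m Hm. assert (0 < INR m) by (apply lt_0_INR; lia).
    induction k; intro Hkm.
    - simpl. replace (0 / INR m) with (0 + 0) by (field; lra).
      assert (phi (0+0) = phi 0 + phi 0) by (apply Hadd; lra).
      replace (0+0) with 0 in * by ring. lra.
    - rewrite S_INR. replace ((INR k + 1) / INR m) with (INR k / INR m + 1 / INR m) by (field; lra).
      assert (INR (S k) <= INR m) by (apply le_INR; lia). rewrite S_INR in H0.
      assert (0 <= INR k) by apply pos_INR.
      rewrite Hadd; [rewrite IHk by lia; ring | | |].
      + apply Rdiv_le_0_compat'; lra.
      + apply Rdiv_le_0_compat'; lra.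
      + replace (INR k / INR m + 1 / INR m) with ((INR k + 1) / INR m) by (field; lra).
        apply Rdiv_le_1'; lra. }
  assert (Hq : forall m : nat, (1 <= m)%nat -> forall k : nat, (k <= m)%nat ->
            phi (INR k / INR m) = INR k / INR m).
  { intros m Hm k Hkm. assert (0 < INR m) by (apply lt_0_INR; lia).
    pose proof (Hk m Hm m (le_n m)). replace (INR m / INR m) with 1 in H0 by (field; lra).
    assert (phi (1 / INR m) = 1 / INR m) by (rewrite H1 in H0; field_simplify; [|lra]; 
      apply (Rmult_eq_reg_l (INR m)); [|lra]; field_simplify; lra).
    rewrite Hk by auto. rewrite H2. field. lra. }
  intros s Hs. apply NNPP. intro Hne.
  set (e := Rabs (phi s - s)). assert (He : 0 < e) by (apply Rabs_pos_lt; lra).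
  destruct (archimed (/ e)) as [Hup _].
  set (m := Z.to_nat (up (/ e))).
  assert (Hm : INR m > / e).
  { unfold m. rewrite INR_IZR_INZ. rewrite Z2Nat.id. lra.
    apply le_IZR. assert (0 < / e) by (apply Rinv_0_lt_compat; lra). lra. }
  assert (Hm1 : (1 <= m)%nat).
  { destruct m. simpl in Hm. assert (0 < / e) by (apply Rinv_0_lt_compat; lra). lra. lia. }
  assert (HmR : 0 < INR m) by (apply lt_0_INR; lia).
  assert (Hfind : forall j : nat, INR j / INR m <= s \/
            exists k : nat, (k < j)%nat /\ INR k / INR m <= s < (INR k + 1) / INR m).
  { induction j.
    - left. simpl. replace (0 / INR m) with 0 by (field; lra). lra.
    - destruct IHj as [Hl | [k [Hk1 Hk2]]].
      + destruct (Rle_lt_dec (INR (S j) / INR m) s).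
        * left; auto.
        * right. exists j. split. lia. rewrite S_INR in r. split; lra.
      + right. exists k. split. lia. auto. }
  destruct (Hfind (S m)) as [Hl | [k [Hkm [Hk1 Hk2]]]].
  - rewrite S_INR in Hl. assert ((INR m + 1) / INR m > 1).
    { apply (Rmult_lt_reg_r (INR m)); auto. field_simplify; lra. }
    lra.
  - assert (Hkm' : (k <= m)%nat) by lia.
    destruct (Nat.eq_dec k m).
    + subst k. replace (INR m / INR m) with 1 in Hk1 by (field; lra).
      assert (s = 1) by lra. subst s. rewrite H1 in Hne. lra.
    + assert (Hs1 : (S k <= m)%nat) by lia.
      pose proof (Hq m Hm1 k Hkm') as Ek. pose proof (Hq m Hm1 (S k) Hs1) as Ek1.
      rewrite S_INR in Ek1.
      assert (0 <= INR k) by apply pos_INR.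
      assert (INR (S k) <= INR m) by (apply le_INR; lia). rewrite S_INR in H0.
      assert (0 <= INR k / INR m) by (apply Rdiv_le_0_compat'; lra).
      assert ((INR k + 1) / INR m <= 1) by (apply Rdiv_le_1'; lra).
      pose proof (Hmono _ _ H2 Hk1 ltac:(lra)).
      pose proof (Hmono s ((INR k + 1) / INR m) ltac:(lra) ltac:(lra) H3).
      rewrite Ek in H4. rewrite Ek1 in H5.
      assert (Hw : (INR k + 1) / INR m - INR k / INR m = / INR m) by (field; lra).
      assert (e <= / INR m).
      { unfold e. apply Rabs_le. lra. }
      assert (/ INR m < e).
      { apply (Rmult_lt_reg_l (INR m)); auto. rewrite Rinv_r by lra.
        apply (Rmult_lt_reg_l (/ e)). apply Rinv_0_lt_compat; lra.
        field_simplify; lra. }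
      lra.
Qed.

Lemma gid n (g : nat -> R -> R) : (3 <= n)%nat ->
  (forall i, (i<n)%nat -> (forall s, 0 <= s <= 1 -> 0 <= g i s <= 1) /\ g i 0 = 0 /\ g i 1 = 1) ->
  (forall lam, in_simplex_std n lam -> in_simplex_std n (fun i => g i (lam i))) ->
  forall i s, (i<n)%nat -> 0 <= s <= 1 -> g i s = s.
Proof.
  intros Hn Hg Himg.
  assert (H0 : forall i, (i<n)%nat -> g i 0 = 0) by (intros i Hi; apply Hg; auto).
  pose proof (L3 n g H0 Himg) as L.
  assert (Heq : forall i s, (i<n)%nat -> 0 <= s <= 1 -> g i s = g 0%nat s).
  { intros i s Hi Hs. destruct (Nat.eq_dec i 0); [subst; reflexivity|].
    set (k := if Nat.eqb i 1 then 2%nat else 1%nat).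
    assert (Hk : (k < n)%nat /\ k <> i /\ k <> 0%nat).
    { unfold k. destruct (Nat.eqb_spec i 1); lia. }
    destruct Hk as [Hk1 [Hk2 Hk3]].
    pose proof (L i k 0%nat s (1 - s) 0 Hi Hk1 ltac:(lia) ltac:(lia) ltac:(lia) ltac:(lia)
                  ltac:(lra) ltac:(lra) ltac:(lra) ltac:(lra)).
    pose proof (L 0%nat k i s (1 - s) 0 ltac:(lia) Hk1 Hi ltac:(lia) ltac:(lia) ltac:(lia)
                  ltac:(lra) ltac:(lra) ltac:(lra) ltac:(lra)).
    rewrite H0 in * by lia. lra. }
  assert (Hphi : forall s, 0 <= s <= 1 -> g 0%nat s = s).
  { apply phi_id.
    - intros s Hs. apply (proj1 (Hg 0%nat ltac:(lia)) s Hs).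
    - apply Hg; lia.
    - intros s t Hs Ht Hst.
      pose proof (L 0%nat 1%nat 2%nat s t (1 - s - t) ltac:(lia) ltac:(lia) ltac:(lia)
                  ltac:(lia) ltac:(lia) ltac:(lia) Hs Ht ltac:(lra) ltac:(lra)).
      pose proof (L 0%nat 2%nat 1%nat (s + t) (1 - s - t) 0 ltac:(lia) ltac:(lia) ltac:(lia)
                  ltac:(lia) ltac:(lia) ltac:(lia) ltac:(lra) ltac:(lra) ltac:(lra) ltac:(lra)).
      rewrite (Heq 1%nat t) in H by (lia || lra).
      rewrite H0 in H1 by lia. lra. }
  intros i s Hi Hs. rewrite Heq by auto. auto.
Qed.

Lemma compact1 (H : (R -> Prop) -> Prop) :
  (forall A B : R -> Prop, (forall x, A x -> B x) -> H B -> H A) ->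
  (forall A B, H A -> H B -> H (fun x => A x \/ B x)) ->
  (forall s, 0 <= s <= 1 -> exists d, 0 < d /\ H (fun x => 0 <= x <= 1 /\ Rabs (x - s) < d)) ->
  H (fun x => 0 <= x <= 1).
Proof.
  intros Hmono Hun Hloc.
  set (S := fun x => 0 <= x <= 1 /\ H (fun y => 0 <= y <= x)).
  assert (HS0 : S 0).
  { split. lra. destruct (Hloc 0 ltac:(lra)) as [d [Hd HH]].
    refine (Hmono _ _ _ HH). intros y Hy. assert (y = 0) by lra. subst y.
    rewrite Rminus_0_r, Rabs_R0. split; lra.
  }
  assert (Hb : bound S) by (exists 1; intros x [Hx _]; lra).
  destruct (completeness S Hb (ex_intro _ 0 HS0)) as [c [Hub Hlub]].
  assert (Hc0 : 0 <= c) by (apply Hub; auto).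
  assert (Hc1 : c <= 1) by (apply Hlub; intros x [Hx _]; lra).
  destruct (Hloc c ltac:(lra)) as [d [Hd Hc]].
  assert (Hx : exists x, S x /\ c - d < x).
  { apply NNPP; intro Hn. assert (c <= c - d).
    { apply Hlub. intros x Hx. apply Rnot_lt_le. intro Hlt. apply Hn. exists x; auto. }
    lra. }
  destruct Hx as [x [[Hx01 HSx] Hxc]].
  set (z := Rmin 1 (c + d / 2)).
  assert (Hz : S z).
  { split. unfold z; split; [apply Rmin_case; lra | apply Rmin_l].
    apply (Hmono _ (fun y => 0 <= y <= x \/ (0 <= y <= 1 /\ Rabs (y - c) < d))).
    - intros y Hy. destruct (Rle_dec y x). left; lra. right. split.
      + split. lra. destruct Hy. eapply Rle_trans; [exact H1|]. unfold z; apply Rmin_l.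
      + assert (y <= c + d/2) by (destruct Hy; eapply Rle_trans; [exact H1|]; unfold z; apply Rmin_r).
        assert (x <= c) by (apply Hub; split; auto).
        apply Rabs_def1; lra.
    - apply Hun; auto. }
  assert (z <= c) by (apply Hub; auto).
  unfold z in *. revert Hz H0. apply Rmin_case_strong; intros.
  - destruct Hz as [_ Hz]. refine (Hmono _ _ (fun y Hy => Hy) _). auto.
  - lra.
Qed.

Definition cube (N : nat) (mu : nat -> R) : Prop := forall i, (i < N)%nat -> 0 <= mu i <= 1.
Definition ballN (N : nat) (lam : nat -> R) (r : R) (mu : nat -> R) : Prop :=
  forall i, (i < N)%nat -> Rabs (mu i - lam i) < r.

Lemma compactN : forall N (G : ((nat -> R) -> Prop) -> Prop),
  (forall A B : (nat -> R) -> Prop, (forall x, A x -> B x) -> G B -> G A) ->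
  (forall A B, G A -> G B -> G (fun x => A x \/ B x)) ->
  (forall lam, cube N lam -> exists r, 0 < r /\ G (fun mu => cube N mu /\ ballN N lam r mu)) ->
  G (cube N).
Proof.
  induction N; intros G Hmono Hun Hloc.
  - destruct (Hloc (fun _ => 0)) as [r [Hr HG]]. intros i Hi; lia.
    refine (Hmono _ _ _ HG). intros mu Hmu. split; auto. intros i Hi; lia.
  - assert (Hs : forall s, 0 <= s <= 1 -> exists d, 0 < d /\
        G (fun mu => cube N mu /\ 0 <= mu N <= 1 /\ Rabs (mu N - s) < d)).
    { intros s Hs.
      set (G' := fun A : (nat -> R) -> Prop => exists d, 0 < d /\
                   G (fun mu => A mu /\ 0 <= mu N <= 1 /\ Rabs (mu N - s) < d)).
      assert (HG' : G' (cube N)).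
      { apply IHN.
        - intros A B HAB [d [Hd HB]]. exists d. split; auto.
          refine (Hmono _ _ (fun mu H => match H with conj a b => conj (HAB mu a) b end) _). auto.
        - intros A B [d1 [Hd1 HA]] [d2 [Hd2 HB]]. exists (Rmin d1 d2). split.
          apply Rmin_case; auto.
          refine (Hmono _ _ _ (Hun _ _ HA HB)). intros mu [[Ha | Hb] [H1 H2]].
          + left. repeat split; auto; try lra. eapply Rlt_le_trans; [exact H2|apply Rmin_l].
          + right. repeat split; auto; try lra. eapply Rlt_le_trans; [exact H2|apply Rmin_r].
        - intros lam Hlam.
          set (lam' := fun i => if Nat.eqb i N then s else lam i).
          destruct (Hloc lam') as [r [Hr HG]].
          { intros i Hi. unfold lam'. destruct (Nat.eqb_spec i N). lra. apply Hlam; lia. }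
          exists r. split; auto. exists r. split; auto.
          refine (Hmono _ _ _ HG). intros mu [[Hc Hb] [H1 H2]]. split.
          + intros i Hi. destruct (Nat.eq_dec i N). subst; auto. apply Hc; lia.
          + intros i Hi. unfold lam'. destruct (Nat.eqb_spec i N). subst; auto.
            apply Hb; lia. }
      destruct HG' as [d [Hd HG]]. exists d. split; auto. }
    set (H := fun B : R -> Prop => G (fun mu => cube N mu /\ 0 <= mu N <= 1 /\ B (mu N))).
    assert (HH : H (fun x => 0 <= x <= 1)).
    { apply compact1.
      - intros A B HAB HB. refine (Hmono _ _ (fun mu Hmu => match Hmu with conj a (conj b c) => conj a (conj b (HAB _ c)) end) HB).
      - intros A B HA HB. refine (Hmono _ _ _ (Hun _ _ HA HB)). intros mu [a [b [c|c]]].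
        left; auto. right; auto.
      - intros s Hs0. destruct (Hs s Hs0) as [d [Hd HG]]. exists d. split; auto.
        refine (Hmono _ _ _ HG). intros mu [a [b [c e]]]. auto. }
    refine (Hmono _ _ _ HH). intros mu Hmu. split; [|split].
    + intros i Hi; apply Hmu; lia.
    + apply Hmu; lia.
    + apply Hmu; lia.
Qed.

Lemma pcont {F : TVS} N (a : nat -> F) (lam : nat -> R) (O : F -> Prop) :
  vopen O -> O (vsum N (fun i => vscal (lam i) (a i))) ->
  exists r, 0 < r /\ forall mu, ballN N lam r mu -> O (vsum N (fun i => vscal (mu i) (a i))).
Proof.
  revert O. induction N; intros O HO Hx.
  - exists 1. split. lra. intros; simpl in *; auto.
  - simpl in Hx. destruct (vadd_cont _ _ _ HO Hx) as [V [W [HV [Vx [HW [Wy Hvw]]]]]].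
    destruct (IHN V HV Vx) as [r1 [Hr1 H1]].
    destruct (vscal_cont _ _ _ HW Wy) as [d [V' [Hd [HV' [V'a H2]]]]].
    exists (Rmin r1 d). split. apply Rmin_case; auto.
    intros mu Hmu. simpl. apply Hvw.
    + apply H1. intros i Hi. eapply Rlt_le_trans; [apply Hmu; lia|apply Rmin_l].
    + apply H2; auto. eapply Rlt_le_trans; [apply Hmu; lia|apply Rmin_r].
Qed.

Definition pp {F : TVS} N (a : nat -> F) (lam : nat -> R) : F :=
  vsum N (fun i => vscal (lam i) (a i)).

Lemma p_inj {F : TVS} N (a : nat -> F) lam mu : aff_indep N a ->
  rsum N lam = rsum N mu -> pp N a lam = pp N a mu -> forall i, (i < N)%nat -> lam i = mu i.
Proof.
  intros Hind Hs Hp i Hi.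
  assert (Hc := Hind (fun i => lam i + -1 * mu i)).
  assert (lam i + -1 * mu i = 0); [|lra].
  apply Hc; auto.
  - rewrite rsum_plus, rsum_scal. lra.
  - rewrite (vsum_ext _ _ (fun i => vadd (vscal (lam i) (a i)) (vscal (-1) (vscal (mu i) (a i))))).
    + rewrite vsum_add, <- vsum_scal. fold (pp N a lam). fold (pp N a mu).
      rewrite Hp, <- vopp_scal, vadd_opp. reflexivity.
    + intros j _. rewrite vscal_distr_r, vscal_assoc. reflexivity.
Qed.

Definition ev (i : nat) : nat -> R := fun j => if Nat.eqb j i then 1 else 0.

Lemma ev_simplex N i : (i < N)%nat -> in_simplex_std N (ev i).
Proof. intros Hi. split. intros j _; unfold ev; destruct (Nat.eqb j i); lra.
  apply rsum_single; auto. Qed.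

Lemma a_pp {F : TVS} N (a : nat -> F) i : (i < N)%nat -> a i = pp N a (ev i).
Proof. intros. unfold pp, ev. rewrite vsum_single; auto. Qed.

Lemma fixV {F : TVS} N (a : nat -> F) (K : F -> Prop) (T : F -> F -> Prop) :
  aff_indep N a ->
  (forall x, K x <-> exists lam, in_simplex_std N lam /\ x = pp N a lam) ->
  (1 <= N)%nat -> star_WNQ K K T ->
  forall V, nbhd0 V -> exists lam, in_simplex_std N lam /\ T_V K T V (pp N a lam) (pp N a lam).
Proof.
  intros Hind HK HN HW V HV.
  assert (Hvert : forall i, (i < N)%nat -> K (a i)).
  { intros i Hi. apply HK. exists (ev i). split. apply ev_simplex; auto. apply a_pp; auto. }
  destruct (Nat.eq_dec N 1) as [E1|E1].
  - subst N.
    destruct (HW V HV 1%nat a ltac:(lia) Hvert ltac:(intros; lia)) as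
      [y [g [Hy [Hg [_ [_ [_ Hq]]]]]]].
    assert (Hl1 : in_simplex_std 1 (fun _ => 1)) by (split; [intros; lra | simpl; lra]).
    exists (fun _ => 1). split; auto.
    specialize (Hq _ Hl1). cbn [vsum] in Hq.
    destruct (Hg 0%nat ltac:(lia)) as [_ [_ [_ Hg1]]]. rewrite Hg1 in Hq.
    destruct (Hy 0%nat ltac:(lia)) as [Ky _].
    apply HK in Ky. destruct Ky as [q [[_ Hq1] Hyq]].
    unfold pp in Hyq. cbn [vsum rsum] in Hyq, Hq1.
    replace (q 0%nat) with 1 in Hyq by lra.
    rewrite Hyq, (vscal_one (vadd _ _)), (vadd_0l (vadd _ _)) in Hq. unfold pp. cbn [vsum]. exact Hq.
  - set (half := fun j => if Nat.eqb j 0 then / 2 else if Nat.eqb j 1 then / 2 else 0).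
    set (m := pp N a half).
    set (x := fun i => if Nat.ltb i N then a i else m).
    assert (Hhalf : in_simplex_std N half).
    { split.
      - intros j _. unfold half. destruct (Nat.eqb j 0), (Nat.eqb j 1); lra.
      - rewrite (rsum3 N 0 1 0 (/2) (/2) 0); try lia; [lra|].
        intros j Hj. unfold half, sg. destruct (Nat.eqb_spec j 0), (Nat.eqb_spec j 1); subst; try lia; lra. }
    assert (Hx : forall i, (i < S N)%nat -> K (x i)).
    { intros i Hi. unfold x. destruct (Nat.ltb_spec i N). apply Hvert; auto.
      apply HK. exists half; split; auto. }
    assert (Hdist : forall i j, (i < S N)%nat -> (j < S N)%nat -> x i = x j -> i = j).
    { assert (Hvm : forall i, (i < N)%nat -> a i <> m).
      { intros i Hi Heq. rewrite (a_pp N a i Hi) in Heq.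
        pose proof (p_inj N a _ _ Hind ltac:(rewrite (proj2 (ev_simplex N i Hi)), (proj2 Hhalf); auto) Heq i Hi).
        unfold ev, half in H. rewrite Nat.eqb_refl in H.
        destruct (Nat.eqb i 0), (Nat.eqb i 1); lra. }
      intros i j Hi Hj Heq. unfold x in Heq.
      destruct (Nat.ltb_spec i N), (Nat.ltb_spec j N).
      - rewrite (a_pp N a i), (a_pp N a j) in Heq by auto.
        pose proof (p_inj N a _ _ Hind ltac:(rewrite (proj2 (ev_simplex N i H)), (proj2 (ev_simplex N j H0)); auto) Heq i H).
        unfold ev in H1. rewrite Nat.eqb_refl in H1. destruct (Nat.eqb_spec i j); auto; lra.
      - exfalso. apply (Hvm i); auto.
      - exfalso. apply (Hvm j); auto.
      - lia. }
    destruct (HW V HV (S N) x ltac:(lia) Hx Hdist) as [y [g [Hy [Hg [Himg [_ [_ Hq]]]]]]].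
    assert (Hgid : forall i s, (i < S N)%nat -> 0 <= s <= 1 -> g i s = s).
    { apply gid; auto. lia. intros i Hi. destruct (Hg i Hi) as [A [_ [B C]]]. auto. }
    assert (Hq0 : forall i, exists q, (i < N)%nat -> in_simplex_std N q /\ y i = pp N a q).
    { intros i. destruct (Nat.ltb_spec i N).
      - destruct (Hy i ltac:(lia)) as [Ky _]. apply HK in Ky. destruct Ky as [q Hq']. exists q; auto.
      - exists (fun _ => 0). intros; lia. }
    set (qf := fun i => proj1_sig (constructive_indefinite_description _ (Hq0 i))).
    assert (Hqf : forall i, (i < N)%nat -> in_simplex_std N (qf i) /\ y i = pp N a (qf i)).
    { intros i Hi. unfold qf. destruct (constructive_indefinite_description _ (Hq0 i)). simpl. auto. }
    destruct N as [|n']; [lia|].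
    destruct (stoch n' qf) as [lam [Hlam Hfix]].
    { intros i j Hi Hj. apply (proj1 (proj1 (Hqf i Hi))); auto. }
    { intros i Hi. apply (proj2 (proj1 (Hqf i Hi))). }
    set (N := S n') in *.
    set (lamE := fun i => if Nat.ltb i N then lam i else 0).
    assert (Hlam1 : forall i, (i < N)%nat -> 0 <= lam i <= 1).
    { intros i Hi. split. apply Hlam; auto. rewrite <- (proj2 Hlam). apply rsum_ge_term; auto. apply Hlam. }
    assert (HlamE : in_simplex_std (S N) lamE).
    { split.
      - intros i _. unfold lamE. destruct (Nat.ltb_spec i N). apply Hlam; auto. lra.
      - cbn [rsum]. unfold lamE at 2. rewrite Nat.ltb_irrefl, Rplus_0_r.
        rewrite <- (proj2 Hlam). apply rsum_ext. intros i Hi. unfold lamE.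
        destruct (Nat.ltb_spec i N); [reflexivity|lia]. }
    exists lam. split; auto.
    specialize (Hq lamE HlamE). cbn [vsum] in Hq.
    assert (E : lamE N = 0) by (unfold lamE; rewrite Nat.ltb_irrefl; reflexivity).
    rewrite E in Hq. rewrite (Hgid N 0) in Hq by (lia || lra). rewrite !vscal_0, !vadd_zero in Hq.
    replace (vsum N (fun i => vscal (lamE i) (x i))) with (pp N a lam) in Hq.
    2:{ apply vsum_ext. intros i Hi. unfold lamE, x. destruct (Nat.ltb_spec i N); [reflexivity|lia]. }
    replace (vsum N (fun i => vscal (g i (lamE i)) (y i))) with (pp N a lam) in Hq; auto.
    transitivity (vsum N (fun i => vscal (lam i) (vsum N (fun j => vscal (qf i j) (a j))))).
    + unfold pp. rewrite vsum_swap. apply vsum_ext. intros j Hj. rewrite <- Hfix; auto.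
    + apply vsum_ext. intros i Hi. rewrite Hgid by (first [lia | unfold lamE; destruct (Nat.ltb_spec i N); [apply Hlam1; auto|lra]]).
      unfold lamE. destruct (Nat.ltb_spec i N); [|lia]. rewrite (proj2 (Hqf i Hi)). reflexivity.
Qed.

Theorem theorem7 (F : TVS) (K : F -> Prop) (T : F -> F -> Prop) :
  is_simplex K ->
  (exists x, K x) ->
  (forall x y, K x -> T x y -> K y) ->
  star_WNQ K K T ->
  exists xs, K xs /\ in_closure_graph K K T xs xs.
Proof.
  intros [N [a [Hind HK]]] [x0 Kx0] Hself HW.
  change (forall x, K x <-> exists lam, in_simplex_std N lam /\ x = pp N a lam) in HK.
  assert (HN : (1 <= N)%nat).
  { destruct N; [|lia]. apply HK in Kx0. destruct Kx0 as [lam [[_ H] _]]. simpl in H. lra. }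
  apply NNPP; intro Hno.
  set (G := fun A : (nat -> R) -> Prop => exists O : F -> Prop, vopen O /\ O vzero /\
        forall mu, A mu -> in_simplex_std N mu -> forall t v, T (pp N a mu) t -> O v ->
          pp N a mu = vadd t v -> False).
  assert (HGc : G (cube N)).
  { apply compactN.
    - intros A B HAB [O [HO [O0 HB]]]. exists O. repeat split; auto.
      intros mu Hmu. apply HB. auto.
    - intros A B [O1 [HO1 [O10 HA]]] [O2 [HO2 [O20 HB]]].
      exists (fun z => O1 z /\ O2 z). split. apply vopen_inter; auto. split. auto.
      intros mu [Hmu|Hmu] Hs t v HT [Ov1 Ov2] Heq.
      + eapply HA; eauto.
      + eapply HB; eauto.
    - intros lam Hc. destruct (Req_dec (rsum N lam) 1) as [Hs|Hs].
      + assert (Hl : in_simplex_std N lam) by (split; auto; intros i Hi; apply Hc; auto).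
        set (xs := pp N a lam).
        assert (Kxs : K xs) by (apply HK; exists lam; auto).
        assert (Hbad : exists U W, vopen U /\ U xs /\ vopen W /\ W xs /\
                  forall x' y', K x' -> T x' y' -> U x' -> W y' -> False).
        { apply NNPP; intro Hn; apply Hno. exists xs. split; auto. split; auto. split; auto.
          intros U W HU Ux HW' Wx. apply NNPP; intro Hn2. apply Hn. exists U, W.
          repeat split; auto. intros x' y' H1 H2 H3 H4. apply Hn2. exists x', y'; auto. }
        destruct Hbad as [U [W [HU [Ux [HW' [Wx Hbad]]]]]].
        assert (Wx' : W (vadd xs vzero)) by (rewrite vadd_zero; auto).
        destruct (vadd_cont _ _ _ HW' Wx') as [A [B [HA [Ax [HB [B0 HAB]]]]]].
        assert (B0' : B (vscal (-1) vzero)) by (rewrite vscal_a0; auto).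
        destruct (vscal_cont _ _ _ HB B0') as [d [O [Hd [HO [O0 Hsc]]]]].
        destruct (pcont N a lam (fun z => U z /\ A z) (vopen_inter _ _ HU HA) (conj Ux Ax))
          as [r [Hr Hp]].
        exists r. split; auto. exists O. split; auto. split; auto.
        intros mu [Hcm Hbm] Hsm t v HT Ov Heq.
        destruct (Hp mu Hbm) as [Um Am].
        apply (Hbad (pp N a mu) t); auto.
        * apply HK. exists mu; auto.
        * rewrite (solve_t _ _ _ Heq). apply HAB; auto. apply Hsc; auto.
          replace (-1 - -1) with 0 by ring. rewrite Rabs_R0. auto.
      + set (e := Rabs (rsum N lam - 1)).
        assert (He : 0 < e) by (apply Rabs_pos_lt; lra).
        assert (HNp : 0 < INR N + 1) by (pose proof (pos_INR N); lra).
        exists (e / (INR N + 1)). split. apply Rdiv_lt_0_compat; lra.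
        exists (fun _ => True). split. apply vopen_full. split. auto.
        intros mu [_ Hb] [_ Hsm] t v _ _ _.
        pose proof (rsum_close N lam mu _ Hb) as Hcl. rewrite Hsm in Hcl.
        replace (1 - rsum N lam) with (- (rsum N lam - 1)) in Hcl by ring.
        rewrite Rabs_Ropp in Hcl. fold e in Hcl.
        assert (INR N * (e / (INR N + 1)) < e).
        { apply (Rmult_lt_reg_r (INR N + 1)); auto. field_simplify; lra. }
        lra. }
  destruct HGc as [O [HO [O0 HGO]]].
  assert (HVO : nbhd0 O) by (exists O; auto).
  destruct (fixV N a K T Hind HK HN HW O HVO) as [lam [Hl [_ [t [v [HT [Ov Heq]]]]]]].
  refine (HGO lam _ Hl t v HT Ov Heq).
  intros i Hi. split. apply Hl; auto. rewrite <- (proj2 Hl). apply rsum_ge_term; auto. apply Hl.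
Qed.
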